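(* Let $n,m\in\mathbb{N}$ and $\varrho:\mathbb{C}\to\mathbb{C}$. Then $\mathcal{SN}^\varrho_{n,m}\subseteq\mathcal{I}^\varrho_{n,m,n+m+1}$.
   Context: $\mathcal{SN}^\varrho_{n,m}$ denotes the set of shallow complex-valued neural networks, i.e. functions $V_2\circ\varrho^{\times N}\circ V_1:\mathbb{C}^n\to\mathbb{C}^m$ with arbitrary $N\in\mathbb{N}$, $\mathbb{C}$-affine maps $V_1:\mathbb{C}^n\to\mathbb{C}^N$, $V_2:\mathbb{C}^N\to\mathbb{C}^m$ (maps $z\mapsto Az+b$ with complex $A,b$), and $\varrho^{\times N}$ the componentwise application of $\varrho$. $\mathcal{I}^\varrho_{n,m,n+m+1}$ denotes the set of register models, i.e. functions $T_L\circ\tilde\varrho\circ T_{L-1}\circ\cdots\circ\tilde\varrho\circ T_1$ with arbitrary $L\ge2$, $\mathbb{C}$-affine $T_1:\mathbb{C}^n\to\mathbb{C}^{n+m+1}$, $T_L:\mathbb{C}^{n+m+1}\to\mathbb{C}^m$, $T_\ell:\mathbb{C}^{n+m+1}\to\mathbb{C}^{n+m+1}$ for $2\le\ell\le L-1$, where $\tilde\varrho:\mathbb{C}^{n+m+1}\to\mathbb{C}^{n+m+1}$ applies $\varrho$ to exactly one fixed coordinate (the $(n+1)$-th) and the identity to all other coordinates. *)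

(* Defs.v *)
From mathcomp Require Import all_boot all_order all_algebra.
From mathcomp Require Import complex.
From mathcomp Require Import Rstruct.
From Stdlib Require Import Reals.
Set Implicit Arguments. Unset Strict Implicit. Unset Printing Implicit Defensive.
Import GRing.Theory Num.Theory.
Local Open Scope ring_scope.

Definition CC : Type := complex Rdefinitions.R.

Definition is_affine (p q : nat) (T : 'cV[CC]_p -> 'cV[CC]_q) : Prop :=
  exists (A : 'M[CC]_(q, p)) (b : 'cV[CC]_q), T = (fun z => A *m z + b).

Definition rho_cw (rho : CC -> CC) (N : nat) (v : 'cV[CC]_N) : 'cV[CC]_N :=
  map_mx rho v.

Definition SN (rho : CC -> CC) (n m : nat) (f : 'cV[CC]_n -> 'cV[CC]_m) : Prop :=
  exists (N : nat) (V1 : 'cV[CC]_n -> 'cV[CC]_N) (V2 : 'cV[CC]_N -> 'cV[CC]_m),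
    is_affine V1 /\ is_affine V2 /\ f = (fun z => V2 (rho_cw rho (V1 z))).

(* tilde rho : applies rho to the (k+1)-th coordinate (0-based index k)
   and the identity to all other coordinates. *)
Definition rho_at (rho : CC -> CC) (d k : nat) (v : 'cV[CC]_d) : 'cV[CC]_d :=
  \col_i (if (i : nat) == k then rho (v i ord0) else v i ord0).

(* Register models I^rho_{n,m,n+m+1}:
   T_L o rt o T_{L-1} o ... o rt o T_1 with L >= 2, where rt = rho_at rho d n,
   d = n+m+1.  The middle maps T_2, ..., T_{L-1} are given by the list [mid]
   (of length L-2, so L = size mid + 2 >= 2 is arbitrary). *)
Definition register_model (rho : CC -> CC) (n m : nat)
    (T1 : 'cV[CC]_n -> 'cV[CC]_(n + m + 1))
    (mid : seq ('cV[CC]_(n + m + 1) -> 'cV[CC]_(n + m + 1)))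
    (TL : 'cV[CC]_(n + m + 1) -> 'cV[CC]_m) : 'cV[CC]_n -> 'cV[CC]_m :=
  fun z => TL (foldl (fun v T => rho_at rho n (T v))
                     (rho_at rho n (T1 z)) mid).

Definition Reg (rho : CC -> CC) (n m : nat) (f : 'cV[CC]_n -> 'cV[CC]_m) : Prop :=
  exists (T1 : 'cV[CC]_n -> 'cV[CC]_(n + m + 1))
         (mid : seq ('cV[CC]_(n + m + 1) -> 'cV[CC]_(n + m + 1)))
         (TL : 'cV[CC]_(n + m + 1) -> 'cV[CC]_m),
    is_affine T1 /\ (forall T, List.In T mid -> is_affine T) /\ is_affine TL /\
    f = register_model rho T1 mid TL.

(* Main.v *)
Require Import Defs.
From mathcomp Require Import all_boot all_order all_algebra.
From mathcomp Require Import complex Rstruct zify.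
From Stdlib Require Import FunctionalExtensionality.
Set Implicit Arguments. Unset Strict Implicit. Unset Printing Implicit Defensive.
Import GRing.Theory Num.Theory.
Local Open Scope ring_scope.

Definition getv p (u : 'cV[CC]_p) (k : nat) : CC :=
  if insub k is Some j then u j ord0 else 0.

Lemma getvE p (u : 'cV[CC]_p) (j : 'I_p) : getv u j = u j ord0.
Proof. by rewrite /getv valK. Qed.

Lemma getv_lt p (u : 'cV[CC]_p) k (h : (k < p)%N) : getv u k = u (Ordinal h) ord0.
Proof. by rewrite /getv insubT. Qed.

Lemma getv_out p (u : 'cV[CC]_p) k : (p <= k)%N -> getv u k = 0.
Proof. by move=> h; rewrite /getv insubF // ltnNge h. Qed.

Lemma getvD p a (u v : 'cV[CC]_p) k : getv (a *: u + v) k = a * getv u k + getv v k.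
Proof. by rewrite /getv; case: (insub k) => [j|]; rewrite ?mxE // mulr0 addr0. Qed.

Lemma getv0 p k : getv (0 : 'cV[CC]_p) k = 0.
Proof. by rewrite /getv; case: (insub k) => [j|]; rewrite ?mxE. Qed.

Definition mk n m (x : 'cV[CC]_n) (s : CC) (a : 'cV[CC]_m) : 'cV[CC]_(n + m + 1) :=
  \col_i (if ((i : nat) < n)%N then getv x i else if (i : nat) == n then s
          else getv a (i - n.+1)).
Definition xpart n m (v : 'cV[CC]_(n + m + 1)) : 'cV[CC]_n := \col_j getv v j.
Definition accpart n m (v : 'cV[CC]_(n + m + 1)) : 'cV[CC]_m :=
  \col_j getv v (n.+1 + j).
Definition slot n m (v : 'cV[CC]_(n + m + 1)) : CC := getv v n.
Arguments xpart : clear implicits.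
Arguments accpart : clear implicits.
Arguments slot : clear implicits.

Lemma xpart_mk (n m : nat) x s a : xpart n m (mk x s a) = x.
Proof.
apply/matrixP=> j k; rewrite ord1 mxE.
have Hj : (j < n + m + 1)%N by rewrite -addnA ltn_addr.
by rewrite (getv_lt _ Hj) mxE /= ltn_ord getvE.
Qed.

Lemma accpart_mk (n m : nat) x s a : accpart n m (mk x s a) = a.
Proof.
apply/matrixP=> j k; rewrite ord1 mxE.
have Hj : (n.+1 + j < n + m + 1)%N.
  by have := ltn_ord j; lia.
rewrite (getv_lt _ Hj) mxE /=.
have -> : (n.+1 + j < n)%N = false by lia.
have -> : (n.+1 + j == n) = false by lia.
by rewrite addKn getvE.
Qed.

Lemma slot_mk (n m : nat) x s a : slot n m (mk x s a) = s.
Proof.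
have Hn : (n < n + m + 1)%N by rewrite addn1 ltnS leq_addr.
by rewrite /slot (getv_lt _ Hn) mxE /= ltnn eqxx.
Qed.

Lemma rho_at_mk rho (n m : nat) x s a : rho_at rho n (@mk n m x s a) = mk x (rho s) a.
Proof.
apply/matrixP=> i j; rewrite !mxE.
by case: (ltngtP i n) => h.
Qed.

Lemma mk_lin n m a (x x' : 'cV[CC]_n) s s' (c c' : 'cV[CC]_m) :
  mk (a *: x + x') (a * s + s') (a *: c + c') = a *: mk x s c + mk x' s' c'.
Proof.
apply/matrixP=> i j; rewrite !mxE.
case: ifP => _; first by rewrite getvD.
by case: ifP => _ //; rewrite getvD.
Qed.

Lemma mkD n m (x x' : 'cV[CC]_n) s s' (c c' : 'cV[CC]_m) :
  mk (x + x') (s + s') (c + c') = mk x s c + mk x' s' c'.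
Proof. by have := mk_lin 1 x x' s s' c c'; rewrite !scale1r mul1r. Qed.

Lemma xpart_lin (n m : nat) a u v : xpart n m (a *: u + v) = a *: xpart n m u + xpart n m v.
Proof. by apply/matrixP=> i j; rewrite !mxE getvD. Qed.

Lemma accpart_lin (n m : nat) a u v :
  accpart n m (a *: u + v) = a *: accpart n m u + accpart n m v.
Proof. by apply/matrixP=> i j; rewrite !mxE getvD. Qed.

Lemma slot_lin (n m : nat) a u v : slot n m (a *: u + v) = a * slot n m u + slot n m v.
Proof. by rewrite /slot getvD. Qed.

Lemma affine_of (p q : nat) (T L : 'cV[CC]_p -> 'cV[CC]_q) (b : 'cV[CC]_q) :
  (forall a u v, L (a *: u + v) = a *: L u + L v) -> (forall z, T z = L z + b) ->
  is_affine T.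
Proof.
move=> HL HT; exists (\matrix_(i, j) L (delta_mx j ord0) i ord0), b.
apply: functional_extensionality => z; rewrite HT; congr (_ + _).
have L0 : L 0 = 0.
  have H := HL 1 0 0; rewrite scaler0 addr0 scale1r in H.
  by apply: (addrI (L 0)); rewrite addr0 -{}H.
have LD : forall u v, L (u + v) = L u + L v.
  by move=> u v; have := HL 1 u v; rewrite !scale1r.
have LZ : forall a u, L (a *: u) = a *: L u.
  by move=> a u; have := HL a u 0; rewrite addr0 L0 addr0.
have Lsum : forall (F : 'I_p -> 'cV[CC]_p), L (\sum_j F j) = \sum_j L (F j).
  move=> F; apply: (big_rec2 (fun y1 y2 => L y1 = y2)) => // i y1 y2 _ <-.
  by rewrite LD.
rewrite {1}(matrix_sum_delta z).
rewrite Lsum; apply/matrixP=> i k; rewrite ord1 !mxE summxE.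
apply: eq_bigr => j _; rewrite big_ord1 LZ !mxE mulrC.
by [].
Qed.


Definition prel N n (A1 : 'M[CC]_(N, n)) k (x : 'cV[CC]_n) : CC := getv (A1 *m x) k.
Definition pre N n (A1 : 'M[CC]_(N, n)) (b1 : 'cV[CC]_N) k (x : 'cV[CC]_n) : CC :=
  prel A1 k x + getv b1 k.
Definition wv N m (A2 : 'M[CC]_(m, N)) k : 'cV[CC]_m := \col_i getv (row i A2)^T k.

Lemma prel_lin N n (A1 : 'M[CC]_(N, n)) k a u v :
  prel A1 k (a *: u + v) = a * prel A1 k u + prel A1 k v.
Proof. by rewrite /prel mulmxDr -scalemxAr getvD. Qed.

Definition T1f N n m (A1 : 'M[CC]_(N, n)) b1 (z : 'cV[CC]_n) : 'cV[CC]_(n + m + 1) :=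
  mk z (pre A1 b1 0 z) (0 : 'cV[CC]_m).
Definition Mf N n m (A1 : 'M[CC]_(N, n)) b1 (A2 : 'M[CC]_(m, N)) k
  (v : 'cV[CC]_(n + m + 1)) : 'cV[CC]_(n + m + 1) :=
  mk (xpart n m v) (pre A1 b1 k (xpart n m v))
     (accpart n m v + slot n m v *: wv A2 k.-1).
Definition TLf N n m (A2 : 'M[CC]_(m, N)) b2 (v : 'cV[CC]_(n + m + 1)) : 'cV[CC]_m :=
  accpart n m v + slot n m v *: wv A2 N.-1 + b2.

Lemma T1_aff N n m (A1 : 'M[CC]_(N, n)) b1 : is_affine (@T1f N n m A1 b1).
Proof.
apply: (@affine_of _ _ _ (fun z => mk z (prel A1 0 z) (0 : 'cV[CC]_m))
                        (mk 0 (getv b1 0) 0)).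
  by move=> a u v; rewrite prel_lin -mk_lin scaler0 addr0.
by move=> z; rewrite /T1f -mkD !addr0.
Qed.

Lemma M_aff N n m (A1 : 'M[CC]_(N, n)) b1 (A2 : 'M[CC]_(m, N)) k :
  is_affine (Mf A1 b1 A2 k).
Proof.
apply: (@affine_of _ _ _ (fun v => mk (xpart n m v) (prel A1 k (xpart n m v))
     (accpart n m v + slot n m v *: wv A2 k.-1)) (mk 0 (getv b1 k) 0)).
  move=> a u v; rewrite xpart_lin accpart_lin slot_lin prel_lin -mk_lin.
  congr mk; rewrite scalerDl scalerDr !scalerA; exact: addrACA.
by move=> z; rewrite /Mf -mkD !addr0.
Qed.

Lemma TL_aff N n m (A2 : 'M[CC]_(m, N)) b2 : is_affine (@TLf N n m A2 b2).
Proof.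
apply: (@affine_of _ _ _ (fun v => accpart n m v + slot n m v *: wv A2 N.-1) b2) => //.
move=> a u v; rewrite accpart_lin slot_lin scalerDl scalerDr !scalerA; exact: addrACA.
Qed.

Definition accf N n m (A1 : 'M[CC]_(N, n)) b1 (A2 : 'M[CC]_(m, N)) rho k z :
  'cV[CC]_m := \sum_(i < k) rho (pre A1 b1 i z) *: wv A2 i.

Lemma fold_inv N n m (A1 : 'M[CC]_(N, n)) b1 (A2 : 'M[CC]_(m, N)) rho z k :
  foldl (fun v T => rho_at rho n (T v)) (rho_at rho n (T1f m A1 b1 z))
        (map (Mf A1 b1 A2) (iota 1 k)) =
  mk z (rho (pre A1 b1 k z)) (accf A1 b1 A2 rho k z).
Proof.
elim: k => [|k IH].
  by rewrite /= /T1f rho_at_mk /accf big_ord0.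
have -> : iota 1 k.+1 = iota 1 k ++ [:: k.+1].
  by rewrite -[k.+1]addn1 iotaD add1n addn1.
rewrite map_cat foldl_cat IH /= /Mf xpart_mk accpart_mk slot_mk.
by rewrite rho_at_mk /accf big_ord_recr.
Qed.

Lemma final N n m (A1 : 'M[CC]_(N, n)) b1 (A2 : 'M[CC]_(m, N)) rho z :
  accf A1 b1 A2 rho N.-1.+1 z = A2 *m rho_cw rho (A1 *m z + b1).
Proof.
case: N A1 b1 A2 => [|N] A1 b1 A2.
  have W : forall k, wv A2 k = 0.
    by move=> k; apply/matrixP=> i j; rewrite !mxE getv_out.
  by rewrite /accf big_ord1 W scaler0 [A2]thinmx0 mul0mx.
apply/matrixP=> i j; rewrite ord1 /accf summxE !mxE.
apply: eq_bigr => k _; rewrite !mxE /pre /prel !getvE !mxE mulrC.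
by [].
Qed.

Theorem proposition3p4 (n m : nat) (rho : CC -> CC) :
  forall f : 'cV[CC]_n -> 'cV[CC]_m, SN rho f -> Reg rho f.
Proof.
move=> f [N [V1 [V2 [[A1 [b1 ->]] [[A2 [b2 ->]] ->]]]]].
exists (@T1f N n m A1 b1), (map (@Mf N n m A1 b1 A2) (iota 1 N.-1)), (@TLf N n m A2 b2).
split; first exact: T1_aff.
split.
  move=> T; elim: (iota 1 N.-1) => [|x s IH] //= [<-|/IH //].
  exact: M_aff.
split; first exact: TL_aff.
apply: functional_extensionality => z.
rewrite /register_model fold_inv /TLf accpart_mk slot_mk.
by rewrite -final /accf big_ord_recr.
Qed.
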